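(* Let $n\geq 2$ be finite. Then $TA_n=\mathbf{HSP}\,RTA_n=PTA_n$. In particular every $\mathfrak{A}\models\Sigma_n$ is isomorphic to a subdirect product of algebras $\wp(D)$ with $D$ permutable, and for every nonzero $a\in\mathfrak A$ there is a homomorphism $h:\mathfrak{A}\to\wp(S_n)$ with $h(a)\neq\emptyset$, where $S_n\subseteq{}^nn$ is the set of permutations of $n$.
   Context: For a set $U$, $[i,j]$ is the transposition of $n$ swapping $i,j$; the full transposition set algebra with base $U$ is $\langle\mathcal{P}({}^nU);\cap,-,S_{ij}\rangle_{i\neq j\in n}$ with $S_{ij}(X)=\{q\in{}^nU:q\circ[i,j]\in X\}$; $RTA_n$ is the class of subalgebras of direct products of such algebras. A set $D\subseteq{}^nU$ is permutable if $s\in D$ implies $s\circ[i,j]\in D$ for all $i\neq j<n$. For permutable $D$, $\wp(D)=\langle\mathcal{P}(D);\cap,-,S_{ij}\rangle$ with complement relative to $D$ and $S_{ij}(X)=\{q\in D:q\circ[i,j]\in X\}$; $PTA_n=\mathbf{SP}\{\wp(D):D\text{ permutable}\}$. $\Sigma_n$ is the following set of equations in the signature $(\wedge,-,s_{ij})_{i\neq j<n}$: the Boolean algebra axioms; $s_{ij}(x\wedge y)=s_{ij}x\wedge s_{ij}y$; $s_{ij}(-x)=-s_{ij}x$; and $t_1(x)=t_2(x)$ for all words $t_1=s_{i_1j_1}\cdots s_{i_kj_k}$, $t_2=s_{k_1l_1}\cdots s_{k_ml_m}$ with $[i_1,j_1]\circ\dots\circ[i_k,j_k]=[k_1,l_1]\circ\dots\circ[k_m,l_m]$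 in $S_n$ (the paper gives these via the finite Coxeter presentation of $S_n$: $s_{ij}s_{ij}x=x$, $s_{i,i+1}s_{j,j+1}x=s_{j,j+1}s_{i,i+1}x$ for $|i-j|\geq2$, $s_{i,i+1}s_{i+1,i+2}s_{i,i+1}x=s_{i+1,i+2}s_{i,i+1}s_{i+1,i+2}x$). $TA_n=\mathbf{Mod}(\Sigma_n)$. *)

(* Defs.v *)
From mathcomp Require Import all_boot all_fingroup.
Set Implicit Arguments. Unset Strict Implicit. Unset Printing Implicit Defensive.

(* The operation s is given
   for all pairs (i,j); only pairs with i != j are part of the signature:
   axioms and homomorphisms only mention s i j with i != j. *)
Record talg (n : nat) := TAlg {
  carrier :> Type;
  meet : carrier -> carrier -> carrier;
  compl : carrier -> carrier;
  subst : 'I_n -> 'I_n -> carrier -> carrier }.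

Arguments meet {n A} : rename.
Arguments compl {n A} : rename.
Arguments subst {n A} : rename.

Definition join {n} {A : talg n} (x y : A) : A := compl (meet (compl x) (compl y)).

Definition is_hom {n} (A B : talg n) (f : A -> B) : Prop :=
  (forall x y, f (meet x y) = meet (f x) (f y)) /\
  (forall x, f (compl x) = compl (f x)) /\
  (forall (i j : 'I_n), i != j -> forall x, f (subst i j x) = subst i j (f x)).

Definition is_iso {n} (A B : talg n) (f : A -> B) : Prop :=
  is_hom f /\ bijective f.

Definition word_ok {n} (w : seq ('I_n * 'I_n)) : bool :=
  all (fun p => p.1 != p.2) w.

Definition word_perm {n} (w : seq ('I_n * 'I_n)) : 'S_n :=
  foldr (fun p acc => (acc * tperm p.1 p.2)%g) 1%g w.
(* note: (s * t)%g x = t (s x), so word_perm [:: a; b] = [a] o [b] *)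

Definition word_apply {n} {A : talg n} (w : seq ('I_n * 'I_n)) (x : A) : A :=
  foldr (fun p y => subst p.1 p.2 y) x w.

Definition Sigma {n} (A : talg n) : Prop :=
  (forall x y : A, meet x y = meet y x) /\
  (forall x y z : A, meet x (meet y z) = meet (meet x y) z) /\
  (forall x y : A, join x y = join y x) /\
  (forall x y z : A, join x (join y z) = join (join x y) z) /\
  (forall x y : A, meet x (join x y) = x) /\
  (forall x y : A, join x (meet x y) = x) /\
  (forall x y z : A, meet x (join y z) = join (meet x y) (meet x z)) /\
  (forall x y : A, meet x (compl x) = meet y (compl y)) /\
  (forall x y : A, join x (compl x) = join y (compl y)) /\
  (forall (i j : 'I_n), i != j -> forall x y : A,
      subst i j (meet x y) = meet (subst i j x) (subst i j y)) /\
  (forall (i j : 'I_n), i != j -> forall x : A,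
      subst i j (compl x) = compl (subst i j x)) /\
  (forall w1 w2 : seq ('I_n * 'I_n), word_ok w1 -> word_ok w2 ->
      word_perm w1 = word_perm w2 -> forall x : A, word_apply w1 x = word_apply w2 x).

Definition aclass (n : nat) := talg n -> Prop.

Definition prod_alg {n} (I : Type) (F : I -> talg n) : talg n :=
  @TAlg n (forall i, F i)
    (fun x y i => meet (x i) (y i))
    (fun x i => compl (x i))
    (fun a b x i => subst a b (x i)).

Definition Hop {n} (K : aclass n) : aclass n := fun A =>
  exists B : talg n, K B /\ exists f : B -> A, is_hom f /\ (forall y, exists x, f x = y).
Definition Sop {n} (K : aclass n) : aclass n := fun A =>
  exists B : talg n, K B /\ exists f : A -> B, is_hom f /\ injective f.
Definition Pop {n} (K : aclass n) : aclass n := fun A =>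
  exists (I : Type) (F : I -> talg n), (forall i, K (F i)) /\
    exists f : A -> prod_alg F, is_iso f.

Definition fsa (n : nat) (U : Type) : talg n :=
  @TAlg n (('I_n -> U) -> Prop)
    (fun X Y q => X q /\ Y q)
    (fun X q => ~ X q)
    (fun i j X q => X (fun k => q (tperm i j k))).

Definition FullSetAlgs (n : nat) : aclass n := fun A =>
  exists (U : Type) (f : A -> fsa n U), is_iso f.

Arguments fsa n U : clear implicits.
Arguments FullSetAlgs n _ : clear implicits.

Definition RTA (n : nat) : aclass n := Sop (Pop (FullSetAlgs n)).

Definition permutable {n} {U : Type} (D : ('I_n -> U) -> Prop) : Prop :=
  forall s, D s -> forall i j : 'I_n, i != j -> D (fun k => s (tperm i j k)).

Definition wp (n : nat) (U : Type) (D : ('I_n -> U) -> Prop) : talg n :=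
  @TAlg n {X : ('I_n -> U) -> Prop | forall q, X q -> D q}
    (fun X Y => exist (fun Z : ('I_n -> U) -> Prop => forall q, Z q -> D q) (fun q => proj1_sig X q /\ proj1_sig Y q)
                  (fun q H => proj2_sig X q (proj1 H)))
    (fun X => exist (fun Z : ('I_n -> U) -> Prop => forall q, Z q -> D q) (fun q => D q /\ ~ proj1_sig X q) (fun q H => proj1 H))
    (fun i j X => exist (fun Z : ('I_n -> U) -> Prop => forall q, Z q -> D q) (fun q => D q /\ proj1_sig X (fun k => q (tperm i j k)))
                  (fun q H => proj1 H)).

Arguments wp n U D : clear implicits.

Definition WpAlgs (n : nat) : aclass n := fun A =>
  exists (U : Type) (D : ('I_n -> U) -> Prop), permutable D /\
    exists f : A -> wp n U D, is_iso f.

Arguments WpAlgs n _ : clear implicits.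

Definition TA (n : nat) : aclass n := fun A => Sigma A.
Definition PTA (n : nat) : aclass n := Sop (Pop (WpAlgs n)).

Definition Sn_set (n : nat) : ('I_n -> 'I_n) -> Prop := fun q => bijective q.

Arguments RTA n _ : clear implicits.
Arguments TA n _ : clear implicits.
Arguments PTA n _ : clear implicits.
Arguments Sn_set n _ : clear implicits.

(* Main.v *)
Require Import Defs.
From mathcomp Require Import all_boot all_fingroup.
From mathcomp Require Import boolp classical_sets.
Set Implicit Arguments. Unset Strict Implicit. Unset Printing Implicit Defensive.




Ltac sig_destr HS :=
  let c1 := fresh "mC" in let c2 := fresh "mA" in let c3 := fresh "jC" in
  let c4 := fresh "jA" in let c5 := fresh "ab1" in let c6 := fresh "ab2" in
  let c7 := fresh "dis" in let c8 := fresh "z0" in let c9 := fresh "u1" in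
  let c10 := fresh "sM" in let c11 := fresh "sN" in let c12 := fresh "sW" in
  case: HS => c1 [c2 [c3 [c4 [c5 [c6 [c7 [c8 [c9 [c10 [c11 c12]]]]]]]]]].

Definition le {n} {A : talg n} (x y : A) := meet x y = x.

Lemma midem {n} {A : talg n} (HS : Sigma A) (x : A) : meet x x = x.
Proof.
sig_destr HS. by rewrite -{2}(ab2 x x) ab1.
Qed.

Lemma meet0 {n} {A : talg n} (HS : Sigma A) (x y : A) : meet x (meet y (compl y)) = meet y (compl y).
Proof.
have mi := midem HS. sig_destr HS. by rewrite (z0 y x) mA mi.
Qed.

Lemma le_trans' {n} {A : talg n} (HS : Sigma A) (x y z : A) : le x y -> le y z -> le x z.
Proof. sig_destr HS; rewrite /le => h1 h2. by rewrite -h1 -mA h2. Qed.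

Lemma le_glb {n} {A : talg n} (HS : Sigma A) (x y z : A) : le x y -> le x z -> le x (meet y z).
Proof. sig_destr HS; rewrite /le => h1 h2. by rewrite mA h1 h2. Qed.

Lemma le_ml {n} {A : talg n} (HS : Sigma A) (x y : A) : le (meet x y) x.
Proof. have mi := midem HS. sig_destr HS; rewrite /le. by rewrite (mC x y) -mA mi. Qed.

Lemma le_mr {n} {A : talg n} (HS : Sigma A) (x y : A) : le (meet x y) y.
Proof. have mi := midem HS. sig_destr HS; rewrite /le. by rewrite -mA mi. Qed.

Lemma le_refl' {n} {A : talg n} (HS : Sigma A) (x : A) : le x x.
Proof. exact: midem. Qed.

Lemma join0 {n} {A : talg n} (HS : Sigma A) (x y : A) : join (meet y (compl y)) x = x.
Proof. sig_destr HS. by rewrite jC (z0 y x) ab2. Qed.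

Lemma meet1 {n} {A : talg n} (HS : Sigma A) (x y : A) : meet x (join y (compl y)) = x.
Proof. sig_destr HS. by rewrite (u1 y x) ab1. Qed.

Lemma le_of_disj {n} {A : talg n} (HS : Sigma A) (x y : A) :
  meet x (compl y) = meet y (compl y) -> le x y.
Proof.
have j0 := join0 HS; have m1 := meet1 HS.
sig_destr HS => h. rewrite /le. rewrite -{2}(m1 x y) dis h.
by rewrite jC j0.
Qed.

Lemma le_antisym' {n} {A : talg n} (HS : Sigma A) (x y : A) : le x y -> le y x -> x = y.
Proof. sig_destr HS; rewrite /le => h1 h2. by rewrite -h1 mC h2. Qed.

Lemma le_disj_compl {n} {A : talg n} (HS : Sigma A) (x y : A) :
  meet x y = meet y (compl y) -> le x (compl y).
Proof.
have j0 := join0 HS; have m1 := meet1 HS.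
sig_destr HS => h. rewrite /le. by rewrite -{2}(m1 x y) dis h j0.
Qed.

Definition ultra {n} {A : talg n} (F : A -> Prop) :=
  (forall x y, F (meet x y) <-> F x /\ F y) /\ (forall x, F (compl x) <-> ~ F x).

Definition pf {n} {A : talg n} (a : A) (X : A -> Prop) :=
  (forall x y, X x -> le x y -> X y) /\ (forall x y, X x -> X y -> X (meet x y)) /\
  ~ X (meet a (compl a)).

Lemma ultra_exists {n} {A : talg n} (HS : Sigma A) (a : A) :
  a <> meet a (compl a) -> exists F : A -> Prop, ultra F /\ F a.
Proof.
move=> anz.
pose P : set (set A) := fun X => X = set0 \/ (pf a X /\ X a).
have PX : forall X x, P X -> X x -> pf a X /\ X a.
  by move=> X x [->|//].
have [M [PM maxM]] : exists M : set A, P M /\ (forall B : set A, (M `<` B)%classic -> ~ P B).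
  apply: Zorn_bigcup => F FP Ftot.
  have [[X0 [FX0 X0a]]|nex] := pselect (exists X0, F X0 /\ X0 a); last first.
    left; apply/seteqP; split => // x [X FX Xx].
    have [_ Xa] := PX X x (FP X FX) Xx. by case: nex; exists X.
  right; split; last by exists X0.
  split; [|split].
  - move=> x y [X FX Xx] lxy; exists X => //.
    have [[up _] _] := PX X x (FP X FX) Xx. exact: up lxy.
  - move=> x y [X FX Xx] [Y FY Yy].
    have [XY|YX] := Ftot X Y FX FY.
    + exists Y => //. have [[_ [mc _]] _] := PX Y y (FP Y FY) Yy. by apply: mc => //; apply: XY.
    + exists X => //. have [[_ [mc _]] _] := PX X x (FP X FX) Xx. by apply: mc => //; apply: YX.
  - move=> [X FX X00]. have [[_ [_ nz]] _] := PX X _ (FP X FX) X00. exact: nz.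
have [pfM Ma] : pf a M /\ M a.
  case: PM => // M0.
  exfalso; apply: (maxM (fun y => le a y)).
    rewrite M0; split => //; move=> /(_ a (le_refl' HS a)) //.
  right; split; last exact: le_refl' HS a.
  split; [|split].
  - by move=> x y ax xy; exact: (le_trans' HS ax xy).
  - by move=> x y ax ay; apply: le_glb.
  - move=> h; apply: anz. rewrite -{1}h. exact: meet0.
case: pfM => up [mc nz].
exists M; split => //; split.
  move=> x y; split; last by case; apply: mc.
  move=> h; split; apply: (up _ _ h); [exact: le_ml|exact: le_mr].
move=> x; split.
  move=> h1 h2. apply: nz. have := mc _ _ h2 h1.
  by case: (HS) => _ [_ [_ [_ [_ [_ [_ [z0 _]]]]]]]; rewrite (z0 x a).
move=> nMx. apply: contrapT => nMcx.
pose B : set A := fun y => exists f, M f /\ le (meet f x) y.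
apply: (maxM B).
  split.
    by move=> y My; exists y; split => //; apply: le_ml.
  move=> /(_ x) h. apply: nMx. apply: h. by exists a; split => //; apply: le_mr.
right; split; last by exists a; split => //; apply: le_ml.
split; [|split].
- by move=> y z [f [Mf h]] yz; exists f; split => //; exact: (le_trans' HS h yz).
- move=> y z [f [Mf h1]] [g [Mg h2]]; exists (meet f g); split; first exact: mc.
  apply: (le_glb HS).
  + apply: (le_trans' HS _ h1). exact: (le_glb HS (le_trans' HS (le_ml HS _ _) (le_ml HS _ _)) (le_mr HS _ _)).
  + apply: (le_trans' HS _ h2). exact: (le_glb HS (le_trans' HS (le_ml HS _ _) (le_mr HS _ _)) (le_mr HS _ _)).
- move=> [f [Mf h]]. apply: nMcx. apply: (up _ _ Mf). apply: (le_disj_compl HS).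
  move: h; rewrite /le (meet0 HS) => h.
  by case: (HS) => _ [_ [_ [_ [_ [_ [_ [z0 _]]]]]]]; rewrite (z0 x a) -h.
Qed.

Definition perm_of {n} (q : 'I_n -> 'I_n) : 'S_n :=
  match pselect (injective q) with left H => perm H | right _ => 1%g end.

Lemma perm_ofE {n} (q : 'I_n -> 'I_n) : injective q -> perm_of q =1 q.
Proof. rewrite /perm_of; case: pselect => // H _ k; by rewrite permE. Qed.

Definition pw {n} (p : 'S_n) : seq ('I_n * 'I_n) := rev (sval (prod_tpermP p)).

Lemma word_perm_rev {n} (w : seq ('I_n * 'I_n)) :
  word_perm w = (\prod_(t <- rev w) tperm t.1 t.2)%g.
Proof.
elim: w => [|p w IH] /=; first by rewrite big_nil.
by rewrite rev_cons -cats1 big_cat big_seq1 /= IH.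
Qed.

Lemma pw_ok {n} (p : 'S_n) : word_ok (pw p).
Proof. rewrite /pw /word_ok all_rev. by case: prod_tpermP. Qed.

Lemma pw_perm {n} (p : 'S_n) : word_perm (pw p) = p.
Proof. rewrite word_perm_rev /pw revK. by case: prod_tpermP. Qed.

Definition tact {n} {A : talg n} (p : 'S_n) (x : A) : A := word_apply (pw p) x.

Lemma act_word {n} {A : talg n} (HS : Sigma A) w (p : 'S_n) (x : A) :
  word_ok w -> word_perm w = p -> tact p x = word_apply w x.
Proof.
move=> ok wp. rewrite /tact. case: HS => _ [_ [_ [_ [_ [_ [_ [_ [_ [_ [_ W]]]]]]]]]].
apply: W => //; first exact: pw_ok. by rewrite pw_perm.
Qed.

Lemma word_apply_cat {n} {A : talg n} w1 w2 (x : A) :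
  word_apply (w1 ++ w2) x = word_apply w1 (word_apply w2 x).
Proof. by rewrite /word_apply foldr_cat. Qed.

Lemma word_perm_cat1 {n} (w : seq ('I_n * 'I_n)) i j :
  word_perm (w ++ [:: (i, j)]) = (tperm i j * word_perm w)%g.
Proof. by rewrite !word_perm_rev rev_cat big_cat big_seq1. Qed.

Lemma word_meet {n} {A : talg n} (HS : Sigma A) w (x y : A) : word_ok w ->
  word_apply w (meet x y) = meet (word_apply w x) (word_apply w y).
Proof.
case: HS => _ [_ [_ [_ [_ [_ [_ [_ [_ [sM _]]]]]]]]].
elim: w => [|p w IH] //= /andP [pij ok]. by rewrite IH // sM.
Qed.

Lemma word_compl {n} {A : talg n} (HS : Sigma A) w (x : A) : word_ok w ->
  word_apply w (compl x) = compl (word_apply w x).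
Proof.
case: HS => _ [_ [_ [_ [_ [_ [_ [_ [_ [_ [sN _]]]]]]]]]].
elim: w => [|p w IH] //= /andP [pij ok]. by rewrite IH // sN.
Qed.

Lemma act_tperm {n} {A : talg n} (HS : Sigma A) (q : 'I_n -> 'I_n) (i j : 'I_n) (x : A) :
  i != j -> injective q ->
  tact (perm_of (fun k => q (tperm i j k))) x = tact (perm_of q) (subst i j x).
Proof.
move=> ij qi.
have qi' : injective (fun k => q (tperm i j k)).
  by move=> a b /qi /(congr1 (tperm i j)); rewrite !tpermK.
rewrite /tact -[subst i j x]/(word_apply [:: (i, j)] x) -word_apply_cat.
apply: act_word => //.
  rewrite /word_ok all_cat; apply/andP; split; [exact: pw_ok|by rewrite /= ij].
apply/permP => k. rewrite word_perm_cat1 pw_perm permM perm_ofE // perm_ofE //.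
Qed.

Lemma act_id {n} {A : talg n} (HS : Sigma A) (x : A) : tact (perm_of id) x = x.
Proof.
rewrite (@act_word _ _ HS [::]) //. apply/permP => k. rewrite perm_ofE //= ?perm1 //.
Qed.

Lemma Sn_comp {n} (q : 'I_n -> 'I_n) (i j : 'I_n) :
  Sn_set n q -> Sn_set n (fun k => q (tperm i j k)).
Proof.
move=> bq. have bt : bijective (tperm i j) by exists (tperm i j); exact: tpermK.
exact: (bij_comp bq bt).
Qed.

Definition hF {n} {A : talg n} (F : A -> Prop) (x : A) : wp n 'I_n (Sn_set n) :=
  exist (fun X : ('I_n -> 'I_n) -> Prop => forall q, X q -> Sn_set n q)
    (fun q => Sn_set n q /\ F (tact (perm_of q) x)) (fun q H => proj1 H).

Lemma wp_eq {n U} {D : ('I_n -> U) -> Prop} (X Y : wp n U D) :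
  (forall q, proj1_sig X q <-> proj1_sig Y q) -> X = Y.
Proof.
case: X Y => X HX [Y HY] /= h. apply: eq_exist. apply: funext => q. exact/propext.
Qed.

Lemma hF_hom {n} {A : talg n} (HS : Sigma A) (F : A -> Prop) : ultra F -> is_hom (hF F).
Proof.
move=> [uM uC]. split; [|split].
- move=> x y; apply: wp_eq => q /=. rewrite /tact word_meet ?pw_ok // uM. tauto.
- move=> x; apply: wp_eq => q /=. rewrite /tact word_compl ?pw_ok // uC. tauto.
- move=> i j ij x; apply: wp_eq => q /=. split.
    move=> [bq Fq]; split => //; split; first exact: Sn_comp.
    by rewrite act_tperm //; apply: bij_inj.
  move=> [bq [_ Fq]]; split => //. by rewrite -act_tperm //; apply: bij_inj.
Qed.

Lemma sep {n} {A : talg n} (HS : Sigma A) (x y : A) :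
  x <> y -> exists F, ultra F /\ ~ (F x <-> F y).
Proof.
move=> xy.
have z0 : forall u v : A, meet u (compl u) = meet v (compl v) by case: HS => _ [_ [_ [_ [_ [_ [_ [z0 _]]]]]]].
have [e1|n1] := pselect (meet x (compl y) = meet (meet x (compl y)) (compl (meet x (compl y)))).
  have [e2|n2] := pselect (meet y (compl x) = meet (meet y (compl x)) (compl (meet y (compl x)))).
    exfalso; apply: xy; apply: (le_antisym' HS).
      by apply: (le_of_disj HS); rewrite e1 (z0 _ y).
    by apply: (le_of_disj HS); rewrite e2 (z0 _ x).
  have [F [[uM uC] Fa]] := ultra_exists HS n2.
  exists F; split => //. move: Fa; rewrite uM uC. tauto.
have [F [[uM uC] Fa]] := ultra_exists HS n1.
exists F; split => //. move: Fa; rewrite uM uC. tauto.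
Qed.

Lemma hom_join {n} {A B : talg n} (f : A -> B) : is_hom f -> forall (x y : A),
  f (join x y) = join (f x) (f y).
Proof. by case=> hM [hC _] x y; rewrite /join hC hM !hC. Qed.

Lemma hom_word {n} {A B : talg n} (f : A -> B) : is_hom f -> forall w (x : A), word_ok w ->
  f (word_apply w x) = word_apply w (f x).
Proof.
case=> _ [_ hS] w x. elim: w => [|p w IH] //= /andP [pij ok]. by rewrite hS // IH.
Qed.

Lemma Sigma_inj {n} {A B : talg n} (f : A -> B) : is_hom f -> injective f -> Sigma B -> Sigma A.
Proof.
move=> hf fi HS. have hj := hom_join hf. have hw := hom_word hf.
case: (hf) => hM [hC hS].
case: HS => mC [mA [jC [jA [ab1 [ab2 [dis [z0 [u1 [sM [sN W]]]]]]]]]].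
do 11 (try split).
- move=> x y; apply: fi; by rewrite !hM mC.
- move=> x y z; apply: fi; by rewrite !hM mA.
- move=> x y; apply: fi; by rewrite !hj jC.
- move=> x y z; apply: fi; by rewrite !hj jA.
- move=> x y; apply: fi; by rewrite hM hj ab1.
- move=> x y; apply: fi; by rewrite hj hM ab2.
- move=> x y z; apply: fi; by rewrite hM !hj !hM dis.
- move=> x y; apply: fi; by rewrite !hM !hC (z0 _ (f y)).
- move=> x y; apply: fi; by rewrite !hj !hC (u1 _ (f y)).
- move=> i j ij x y; apply: fi; by rewrite hS // !hM sM // !hS.
- move=> i j ij x; apply: fi; by rewrite hS // !hC sN // hS.
- move=> w1 w2 o1 o2 e x; apply: fi; rewrite !hw //; exact: W.
Qed.

Lemma Sigma_surj {n} {A B : talg n} (f : A -> B) : is_hom f -> (forall y, exists x, f x = y) ->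
  Sigma A -> Sigma B.
Proof.
move=> hf fs HS. have hj := hom_join hf. have hw := hom_word hf.
case: (hf) => hM [hC hS].
case: HS => mC [mA [jC [jA [ab1 [ab2 [dis [z0 [u1 [sM [sN W]]]]]]]]]].
do 11 (try split).
- move=> x y; have [x' <-] := fs x; have [y' <-] := fs y.
  by move: (congr1 f (mC x' y')); rewrite !hM.
- move=> x y z; have [x' <-] := fs x; have [y' <-] := fs y; have [z' <-] := fs z.
  by move: (congr1 f (mA x' y' z')); rewrite !hM.
- move=> x y; have [x' <-] := fs x; have [y' <-] := fs y.
  by move: (congr1 f (jC x' y')); rewrite !hj.
- move=> x y z; have [x' <-] := fs x; have [y' <-] := fs y; have [z' <-] := fs z.
  by move: (congr1 f (jA x' y' z')); rewrite !hj.
- move=> x y; have [x' <-] := fs x; have [y' <-] := fs y.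
  by move: (congr1 f (ab1 x' y')); rewrite hM hj.
- move=> x y; have [x' <-] := fs x; have [y' <-] := fs y.
  by move: (congr1 f (ab2 x' y')); rewrite hj hM.
- move=> x y z; have [x' <-] := fs x; have [y' <-] := fs y; have [z' <-] := fs z.
  by move: (congr1 f (dis x' y' z')); rewrite hM !hj !hM.
- move=> x y; have [x' <-] := fs x; have [y' <-] := fs y.
  by move: (congr1 f (z0 x' y')); rewrite !hM !hC.
- move=> x y; have [x' <-] := fs x; have [y' <-] := fs y.
  by move: (congr1 f (u1 x' y')); rewrite !hj !hC.
- move=> i j ij x y; have [x' <-] := fs x; have [y' <-] := fs y.
  by move: (congr1 f (sM i j ij x' y')); rewrite hS // !hM !hS.
- move=> i j ij x; have [x' <-] := fs x.
  by move: (congr1 f (sN i j ij x')); rewrite hS // !hC hS.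
- move=> w1 w2 o1 o2 e x; have [x' <-] := fs x.
  by move: (congr1 f (W w1 w2 o1 o2 e x')); rewrite !hw.
Qed.

Lemma word_prod {n} {I : Type} (F : I -> talg n) w (x : prod_alg F) i :
  word_apply w x i = word_apply w (x i).
Proof. elim: w => [|p w IH] //=. by rewrite -IH. Qed.

Lemma join_prod {n} {I : Type} (F : I -> talg n) (x y : prod_alg F) i :
  join x y i = join (x i) (y i).
Proof. by []. Qed.

Lemma Sigma_prod {n} {I : Type} (F : I -> talg n) : (forall i, Sigma (F i)) -> Sigma (prod_alg F).
Proof.
move=> HS.
do 11 (try split).
all: try (move=> x y; apply: functional_extensionality_dep => i; case: (HS i) => 
  mC [mA [jC [jA [ab1 [ab2 [dis [z0 [u1 [sM [sN W]]]]]]]]]]; rewrite ?join_prod;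
  first [exact: mC | exact: jC | exact: ab1 | exact: ab2 | exact: z0 | exact: u1 | idtac]).
all: try (move=> x y z; apply: functional_extensionality_dep => i; case: (HS i) =>
  mC [mA [jC [jA [ab1 [ab2 [dis [z0 [u1 [sM [sN W]]]]]]]]]]; rewrite ?join_prod;
  first [exact: mA | exact: jA | exact: dis | idtac]).
all: try (move=> a b ab x y; apply: functional_extensionality_dep => i; case: (HS i) => _ [_ [_ [_ [_ [_ [_ [_ [_ [sM _]]]]]]]]];
  exact: sM).
all: try (move=> a b ab x; apply: functional_extensionality_dep => i; case: (HS i) => _ [_ [_ [_ [_ [_ [_ [_ [_ [_ [sN _]]]]]]]]]];
  exact: sN).
all: try (move=> w1 w2 o1 o2 e x; apply: functional_extensionality_dep => i;
  rewrite !word_prod; case: (HS i) => _ [_ [_ [_ [_ [_ [_ [_ [_ [_ [_ W]]]]]]]]]]; exact: W).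

Qed.

Lemma word_wp {n U} (D : ('I_n -> U) -> Prop) (pD : permutable D) w (X : wp n U D) q :
  word_ok w ->
  (proj1_sig (word_apply w X) q <-> D q /\ proj1_sig X (fun k => q (word_perm w k))).
Proof.
elim: w q => [|p w IH] q /=.
  move=> _. have -> : (fun k => q ((1%g : 'S_n) k)) = q by apply: funext => k; rewrite perm1.
  split; last by case. move=> Xq; split => //; exact: (proj2_sig X).
move=> /andP [pij ok]. rewrite (IH _ ok).
have -> : (fun k => q ((word_perm w * tperm p.1 p.2)%g k)) = (fun k => q (tperm p.1 p.2 (word_perm w k))).
  by apply: funext => k; rewrite permM.
split; first by move=> [Dq [_ Xq]].
move=> [Dq Xq]; split => //; split => //; exact: pD.
Qed.

Ltac cs X q := move: (proj2_sig X q); case: (pselect (proj1_sig X q)).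
Ltac wp_solve2 D x y :=
  apply: wp_eq; let q := fresh "q" in intro q; rewrite ?/join /=;
  cs x q; cs y q; case: (pselect (D q)); tauto.
Ltac wp_solve3 D x y z :=
  apply: wp_eq; let q := fresh "q" in intro q; rewrite ?/join /=;
  cs x q; cs y q; cs z q; case: (pselect (D q)); tauto.

Lemma Sigma_wp {n U} (D : ('I_n -> U) -> Prop) : permutable D -> Sigma (wp n U D).
Proof.
move=> pD.
do 11 (try split).
all: try (move=> x y; wp_solve2 D x y).
all: try (move=> x y z; wp_solve3 D x y z).
- move=> i j ij x y. apply: wp_eq => q /=. 
  tauto.
- move=> i j ij x. apply: wp_eq => q /=.
  have : D q -> D (fun k => q (tperm i j k)) by move=> Dq; exact: pD. move: (proj2_sig x (fun k => q (tperm i j k))).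
  case: (pselect (proj1_sig x (fun k => q (tperm i j k)))); case: (pselect (D q)); tauto.
- move=> w1 w2 o1 o2 e x. apply: wp_eq => q. rewrite !word_wp // e. tauto.
Qed.

Lemma Sigma_fsa {n} (U : Type) : Sigma (fsa n U).
Proof.
pose f (X : fsa n U) : wp n U (fun _ => True) :=
  exist (fun Z : ('I_n -> U) -> Prop => forall q, Z q -> True) X (fun _ _ => I).
apply: (@Sigma_inj _ _ _ f); last by apply: Sigma_wp.
  split; [|split].
  - by move=> x y; apply: wp_eq => q /=.
  - by move=> x; apply: wp_eq => q /=; tauto.
  - by move=> i j ij x; apply: wp_eq => q /=; tauto.
by move=> x y /(congr1 (@proj1_sig _ _)).
Qed.

Lemma Pop_sigma {n} (K : aclass n) : (forall B, K B -> Sigma B) -> forall A, Pop K A -> Sigma A.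
Proof.
move=> KS A [I [F [KF [f [hf bf]]]]].
apply: (Sigma_inj hf (bij_inj bf)). apply: Sigma_prod => i; exact: KS.
Qed.

Lemma Sop_sigma {n} (K : aclass n) : (forall B, K B -> Sigma B) -> forall A, Sop K A -> Sigma A.
Proof. move=> KS A [B [KB [f [hf fi]]]]. exact: (Sigma_inj hf fi (KS _ KB)). Qed.

Lemma Hop_sigma {n} (K : aclass n) : (forall B, K B -> Sigma B) -> forall A, Hop K A -> Sigma A.
Proof. move=> KS A [B [KB [f [hf fs]]]]. exact: (Sigma_surj hf fs (KS _ KB)). Qed.

Lemma Full_sigma {n} (A : talg n) : FullSetAlgs n A -> Sigma A.
Proof. move=> [U [f [hf bf]]]. exact: (Sigma_inj hf (bij_inj bf) (Sigma_fsa _)). Qed.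

Lemma Wp_sigma {n} (A : talg n) : WpAlgs n A -> Sigma A.
Proof. move=> [U [D [pD [f [hf bf]]]]]. exact: (Sigma_inj hf (bij_inj bf) (Sigma_wp pD)). Qed.

Definition Ult {n} (A : talg n) := {F : A -> Prop | ultra F}.

Definition gemb {n} {A : talg n} (x : A) : prod_alg (fun F : Ult A => wp n 'I_n (Sn_set n)) :=
  fun F => hF (sval F) x.

Lemma gemb_hom {n} {A : talg n} (HS : Sigma A) : is_hom (@gemb n A).
Proof.
split; [|split].
- move=> x y; apply: functional_extensionality_dep => F. rewrite /gemb.
  by case: (hF_hom HS (proj2_sig F)) => ->.
- move=> x; apply: functional_extensionality_dep => F. rewrite /gemb.
  by case: (hF_hom HS (proj2_sig F)) => _ [-> _].
- move=> i j ij x; apply: functional_extensionality_dep => F. rewrite /gemb.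
  by case: (hF_hom HS (proj2_sig F)) => _ [_ ->].
Qed.

Lemma Sn_id n : Sn_set n id.
Proof. by exists id. Qed.

Lemma gemb_inj {n} {A : talg n} (HS : Sigma A) : injective (@gemb n A).
Proof.
move=> x y e. apply: contrapT => xy. have [F [uF nF]] := sep HS xy. apply: nF.
have E := congr1 (fun h => proj1_sig (h (exist _ F uF)) id) e.
move: E; rewrite /gemb /= !act_id // => E.
have Sid := Sn_id n.
have : Sn_set n id /\ F x <-> Sn_set n id /\ F y by rewrite E.
tauto.
Qed.

Definition Cfsa {n} (A : talg n) := prod_alg (fun _ : Ult A => fsa n 'I_n).

Definition brel {n} {A : talg n} (x : A) (c : Cfsa A) : Prop :=
  forall F q, Sn_set n q -> (c F q <-> proj1_sig (gemb x F) q).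

Definition Bcar {n} (A : talg n) := {p : A * Cfsa A | brel p.1 p.2}.

Lemma brel_meet {n} {A : talg n} (HS : Sigma A) (x y : A) (c d : Cfsa A) :
  brel x c -> brel y d -> brel (meet x y) (meet c d).
Proof.
move=> h1 h2 F q Sq. case: (gemb_hom HS) => -> _.
move: (h1 F q Sq) (h2 F q Sq); rewrite /=; tauto.
Qed.

Lemma brel_compl {n} {A : talg n} (HS : Sigma A) (x : A) (c : Cfsa A) :
  brel x c -> brel (compl x) (compl c).
Proof.
move=> h1 F q Sq. case: (gemb_hom HS) => _ [-> _].
move: (h1 F q Sq); rewrite /=; tauto.
Qed.

Lemma brel_subst {n} {A : talg n} (HS : Sigma A) (i j : 'I_n) (x : A) (c : Cfsa A) : i != j ->
  brel x c -> brel (subst i j x) (subst i j c).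
Proof.
move=> ij h1 F q Sq. case: (gemb_hom HS) => _ [_ ->] //.
have S' := Sn_comp i j Sq.
move: (h1 F _ S'); rewrite /=; tauto.
Qed.

Definition bmeet {n} {A : talg n} (HS : Sigma A) (p p' : Bcar A) : Bcar A :=
  exist (fun r : A * Cfsa A => brel r.1 r.2) (meet (sval p).1 (sval p').1, meet (sval p).2 (sval p').2)
    (brel_meet HS (proj2_sig p) (proj2_sig p')).
Definition bcompl {n} {A : talg n} (HS : Sigma A) (p : Bcar A) : Bcar A :=
  exist (fun r : A * Cfsa A => brel r.1 r.2) (compl (sval p).1, compl (sval p).2)
    (brel_compl HS (proj2_sig p)).
Definition bsubst {n} {A : talg n} (HS : Sigma A) (i j : 'I_n) (p : Bcar A) : Bcar A :=
  match pselect (i != j) with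
  | left h => exist (fun r : A * Cfsa A => brel r.1 r.2) (subst i j (sval p).1, subst i j (sval p).2)
      (brel_subst HS h (proj2_sig p))
  | right _ => p end.

Definition balg {n} {A : talg n} (HS : Sigma A) : talg n :=
  @TAlg n (Bcar A) (bmeet HS) (bcompl HS) (bsubst HS).

Lemma fst_hom {n} {A : talg n} (HS : Sigma A) : is_hom (fun p : balg HS => (sval p).1 : A).
Proof.
split; [by []|split; first by []].
by move=> i j ij p /=; rewrite /bsubst; case: pselect.
Qed.

Lemma snd_hom {n} {A : talg n} (HS : Sigma A) : is_hom (fun p : balg HS => (sval p).2 : Cfsa A).
Proof.
split; [by []|split; first by []].
by move=> i j ij p /=; rewrite /bsubst; case: pselect.
Qed.

Lemma fst_surj {n} {A : talg n} (HS : Sigma A) : forall x : A, exists p : balg HS, (sval p).1 = x.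
Proof.
move=> x. exists (exist (fun r : A * Cfsa A => brel r.1 r.2) (x, fun F q => proj1_sig (gemb x F) q)
  (fun F q _ => iff_refl _)). by [].
Qed.

Lemma snd_inj {n} {A : talg n} (HS : Sigma A) : injective (fun p : balg HS => (sval p).2 : Cfsa A).
Proof.
move=> [[x c] hp] [[x' c'] hp'] /= e. subst c'.
have exx : x = x'.
  apply: (gemb_inj HS). apply: functional_extensionality_dep => F. apply: wp_eq => q.
  have [Sq|nSq] := pselect (Sn_set n q).
    move: (hp F q Sq) (hp' F q Sq) => /=; tauto.
  move: (proj2_sig (gemb x F) q) (proj2_sig (gemb x' F) q); tauto.
subst x'. exact: eq_exist.
Qed.

Lemma id_iso {n} (A : talg n) : is_iso (fun x : A => x).
Proof. split; [split; [by []|split; by []]|by exists id]. Qed.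

Lemma RTA_fsa n : RTA n (fsa n 'I_n).
Proof.
exists (prod_alg (fun _ : unit => fsa n 'I_n)); split.
  exists unit, (fun _ => fsa n 'I_n); split; last first.
    exists (fun x => x); exact: id_iso.
  move=> _; exists 'I_n, (fun x => x); exact: id_iso.
exists (fun x _ => x); split; first by split; [by []|split; by []].
by move=> x y /(congr1 (fun h => h tt)).
Qed.

Theorem theorem3p15 (n : nat) (hn : 2 <= n) :
  (forall A : talg n, TA n A <-> Hop (Sop (Pop (RTA n))) A) /\
  (forall A : talg n, TA n A <-> PTA n A) /\
  (forall A : talg n, Sigma A ->
     forall a : A, a <> meet a (compl a) ->
     exists h : A -> wp n 'I_n (Sn_set n), is_hom h /\ exists q, proj1_sig (h a) q).
Proof.
split; [|split].
- move=> A; split; last first.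
    apply: Hop_sigma; apply: Sop_sigma; apply: Pop_sigma; apply: Sop_sigma; apply: Pop_sigma.
    exact: Full_sigma.
  move=> HS. exists (balg HS); split; last first.
    exists (fun p : balg HS => (sval p).1); split; [exact: fst_hom|exact: fst_surj].
  exists (Cfsa A); split; last first.
    exists (fun p : balg HS => (sval p).2); split; [exact: snd_hom|exact: snd_inj].
  exists (Ult A), (fun _ => fsa n 'I_n); split; first by move=> _; exact: RTA_fsa.
  exists (fun x => x); exact: id_iso.
- move=> A; split; last first.
    apply: Sop_sigma; apply: Pop_sigma; exact: Wp_sigma.
  move=> HS. exists (prod_alg (fun F : Ult A => wp n 'I_n (Sn_set n))); split; last first.
    exists gemb; split; [exact: gemb_hom|exact: gemb_inj].
  exists (Ult A), (fun _ => wp n 'I_n (Sn_set n)); split; last first.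
    exists (fun x => x); exact: id_iso.
  move=> _; exists 'I_n, (Sn_set n); split; last by exists (fun x => x); exact: id_iso.
  by move=> s Ss i j ij; exact: Sn_comp.
- move=> A HS a anz. have [F [uF Fa]] := ultra_exists HS anz.
  exists (hF F); split; first exact: hF_hom.
  exists id => /=; split; first exact: Sn_id.
  by rewrite act_id.
Qed.
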